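(* Let $\mathcal G$ be the complete graph on $N\ge2$ nodes with all edge weights equal to $b>0$, and fix $\alpha,m,\tau,k>0$. Then the function $$J(\gamma)=\frac{\alpha}{2m}(N-1)\frac{1}{1+\dfrac{\gamma\tau Nb+k}{\gamma Nb(\gamma\tau Nb+k)+k^2mNb}},\qquad\gamma\ge0,$$ (the squared $\mathcal H_2$ norm of $H_{\mathrm{DAPI}}$ for this graph) is minimized over $[0,\infty)$ at $$\gamma^*=\frac{k}{Nb\tau}\big(\sqrt{Nbm\tau}-1\big)\quad\text{if } Nbm\tau>1,$$ and at $\gamma^*=0$ otherwise.
   Context: $H_{\mathrm{DAPI}}$ is the system $\dot\theta=\omega$, $\dot\omega=-\tfrac m\tau L_B\theta-\tfrac1\tau\omega+\tfrac1\tau\Omega+\tfrac1\tau w$, $\dot\Omega=-\tfrac1k\omega-\tfrac1k\gamma L_B\Omega$, output $y=(\alpha L_B)^{1/2}\theta$, where $L_B$ is the Laplacian of the complete graph with uniform edge weight $b$ (whose nonzero eigenvalues all equal $Nb$). $\|H\|_2^2:=\int_0^\infty\operatorname{tr}(Ce^{At}BB^Te^{A^Tt}C^T)\,dt$. *)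

(* Defs.v *)
From Stdlib Require Import Reals.
Open Scope R_scope.

Definition J_DAPI (N : nat) (b alpha m tau k gamma : R) : R :=
  let Nb := INR N * b in
  alpha / (2 * m) * (INR N - 1) *
  (1 / (1 + (gamma * tau * Nb + k) /
            (gamma * Nb * (gamma * tau * Nb + k) + k ^ 2 * m * Nb))).

Definition gamma_star (N : nat) (b m tau k : R) : R :=
  let Nb := INR N * b in
  if Rlt_dec 1 (Nb * m * tau)
  then k / (Nb * tau) * (sqrt (Nb * m * tau) - 1)
  else 0.

(* Main.v *)
Require Import Defs.
From Stdlib Require Import Reals Lra Psatz.
Open Scope R_scope.

Lemma key_ineq (x m tau k g0 g : R) :
  0 < x -> 0 < m -> 0 < tau -> 0 < k -> 0 <= g0 -> 0 <= g ->
  (g0 * x * (g0 * tau * x + k) + k^2*m*x) * (g * tau * x + k) <=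
  (g * x * (g * tau * x + k) + k^2*m*x) * (g0 * tau * x + k) ->
  (g0 * tau * x + k) / (g0 * x * (g0 * tau * x + k) + k^2*m*x)
  >= (g * tau * x + k) / (g * x * (g * tau * x + k) + k^2*m*x).
Proof.
  intros. assert (0 < k^2*m*x) by (apply Rmult_lt_0_compat; [apply Rmult_lt_0_compat|]; try nra).
  assert (0 <= g0 * x * (g0 * tau * x + k)) by (apply Rmult_le_pos; [apply Rmult_le_pos|]; try nra; apply Rplus_le_le_0_compat; [apply Rmult_le_pos; [apply Rmult_le_pos|]|]; lra).
  assert (0 <= g * x * (g * tau * x + k)) by (apply Rmult_le_pos; [apply Rmult_le_pos|]; try nra; apply Rplus_le_le_0_compat; [apply Rmult_le_pos; [apply Rmult_le_pos|]|]; lra).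
  assert (0 < g0 * x * (g0 * tau * x + k) + k^2*m*x) by lra.
  assert (0 < g * x * (g * tau * x + k) + k^2*m*x) by lra.
  apply Rle_ge. set (D0 := g0 * x * (g0 * tau * x + k) + k^2*m*x) in *.
  set (D := g * x * (g * tau * x + k) + k^2*m*x) in *.
  set (P0 := g0 * tau * x + k) in *. set (P := g * tau * x + k) in *.
  apply Rmult_le_reg_r with (D0 * D). nra.
  replace (P / D * (D0 * D)) with (P * D0) by (field; lra).
  replace (P0 / D0 * (D0 * D)) with (P0 * D) by (field; lra). nra.
Qed.

Theorem corollary2 (N : nat) (b alpha m tau k : R) :
  (2 <= N)%nat -> 0 < b -> 0 < alpha -> 0 < m -> 0 < tau -> 0 < k ->
  0 <= gamma_star N b m tau k /\
  (forall gamma : R, 0 <= gamma ->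
     J_DAPI N b alpha m tau k (gamma_star N b m tau k)
       <= J_DAPI N b alpha m tau k gamma).
Proof.
  intros HN Hb Ha Hm Ht Hk.
  assert (HNr : 2 <= INR N) by (apply le_INR in HN; simpl in HN; lra).
  set (x := INR N * b).
  assert (Hx : 0 < x) by (unfold x; nra).
  assert (Hg0 : 0 <= gamma_star N b m tau k).
  { unfold gamma_star. fold x. destruct (Rlt_dec 1 (x*m*tau)) as [H|H]; [|lra].
    assert (1 < sqrt (x*m*tau)) by (rewrite <- sqrt_1; apply sqrt_lt_1; lra).
    apply Rmult_le_pos; [|lra]. apply Rlt_le, Rdiv_lt_0_compat; nra. }
  split; [exact Hg0|].
  intros g Hg.
  set (g0 := gamma_star N b m tau k) in *.
  assert (Hineq : (g0 * x * (g0 * tau * x + k) + k^2*m*x) * (g * tau * x + k) <=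
    (g * x * (g * tau * x + k) + k^2*m*x) * (g0 * tau * x + k)).
  { set (u := g*tau*x + k). set (u0 := g0*tau*x+k).
    assert (Hu : k <= u).
    { unfold u. assert (0 <= g*tau*x) by (apply Rmult_le_pos; [apply Rmult_le_pos|]; lra). lra. }
    assert (E1 : g * x = (u - k)/tau) by (unfold u; field; lra).
    assert (E0 : g0 * x = (u0 - k)/tau) by (unfold u0; field; lra).
    rewrite E1, E0.
    assert (Hu0 : k <= u0).
    { unfold u0. assert (0 <= g0*tau*x) by (apply Rmult_le_pos; [apply Rmult_le_pos|]; lra). lra. }
    (* reduce to f(u0) <= f(u) with f(v) = v/tau + k^2 m x / v *)
    assert (Hf : u0/tau + k^2*m*x/u0 <= u/tau + k^2*m*x/u).
    { unfold u0, g0, gamma_star. fold x.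
      destruct (Rlt_dec 1 (x*m*tau)) as [H|H].
      - set (s := sqrt (x*m*tau)).
        assert (Hs2 : s*s = x*m*tau) by (apply sqrt_sqrt; nra).
        assert (Hs : 0 < s) by (apply sqrt_lt_R0; nra).
        replace (k / (x * tau) * (s - 1) * tau * x + k) with (k*s) by (field; nra).
        assert (0 < u) by lra.
        assert (D : u/tau + k^2*m*x/u - (k*s/tau + k^2*m*x/(k*s))
                    = (u - k*s)^2/(tau*u)).
        { replace (k^2*m*x) with (k^2*(s*s)/tau) by (rewrite Hs2; field; lra).
          field. repeat split; lra. }
        assert (0 <= (u - k*s)^2/(tau*u)).
        { apply Rmult_le_pos; [apply pow2_ge_0|]. apply Rlt_le, Rinv_0_lt_compat; nra. }
        lra.
      - replace (0 * tau * x + k) with k by ring.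
        assert (0 < u) by lra.
        assert (D : u/tau + k^2*m*x/u - (k/tau + k^2*m*x/k)
                    = (u-k)*(u*k - k^2*m*x*tau)/(tau*u*k)).
        { field; nra. }
        assert (0 <= (u-k)*(u*k - k^2*m*x*tau)/(tau*u*k)).
        { assert (k*k <= u*k) by (apply Rmult_le_compat_r; lra).
          assert (k^2*(m*x*tau) <= k^2*1) by (apply Rmult_le_compat_l; [apply pow2_ge_0|lra]).
          apply Rmult_le_pos. apply Rmult_le_pos; nra.
          apply Rlt_le, Rinv_0_lt_compat. apply Rmult_lt_0_compat; [apply Rmult_lt_0_compat|]; lra. }
        lra. }
    assert (0 < u) by lra. assert (0 < u0) by lra.
    assert (A : ((u0 - k)/tau * u0 + k^2*m*x) * u = (u0/tau + k^2*m*x/u0 - k/tau) * u0 * u)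
      by (field; lra).
    assert (B : ((u - k)/tau * u + k^2*m*x) * u0 = (u/tau + k^2*m*x/u - k/tau) * u0 * u)
      by (field; lra).
    rewrite A, B. apply Rmult_le_compat_r; [lra|]. apply Rmult_le_compat_r; lra. }
  pose proof (key_ineq x m tau k g0 g Hx Hm Ht Hk Hg0 Hg Hineq) as K.
  unfold J_DAPI. fold x.
  set (q0 := (g0 * tau * x + k) / (g0 * x * (g0 * tau * x + k) + k ^ 2 * m * x)) in *.
  set (q := (g * tau * x + k) / (g * x * (g * tau * x + k) + k ^ 2 * m * x)) in *.
  assert (0 <= q).
  { unfold q. assert (0 <= g*tau*x) by (apply Rmult_le_pos; [apply Rmult_le_pos|]; lra).
    assert (0 <= g*x) by (apply Rmult_le_pos; lra).
    assert (0 < k^2*m*x) by (apply Rmult_lt_0_compat; [apply Rmult_lt_0_compat|]; try nra).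
    assert (0 <= g * x * (g * tau * x + k)) by (apply Rmult_le_pos; lra).
    apply Rmult_le_pos; [lra|]. apply Rlt_le, Rinv_0_lt_compat; lra. }
  assert (0 < alpha / (2*m) * (INR N - 1)).
  { apply Rmult_lt_0_compat; [apply Rdiv_lt_0_compat|]; lra. }
  apply Rmult_le_compat_l; [lra|].
  unfold Rdiv. rewrite !Rmult_1_l. apply Rinv_le_contravar; lra.
Qed.
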